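(* Let $X$ be a K3 surface with Picard lattice $N(X)$ and let $H\in N(X)$ be a primitive element with $H^2=8$. Then there exists $h_1\in N(X)$ with $$h_1^2=\pm 4,\qquad H\cdot h_1\equiv 0\pmod 2,\qquad H\cdot[H,h_1]_{\mathrm{pr}}=\mathbb{Z}$$ if and only if there exists $D\in N(X)$ such that the Mukai vector $(2,H+2D,\pm1)$ is isotropic, i.e. $(H+2D)^2=\pm 4$ (with the same sign). Moreover the correspondence is given by $h_1=H+2D$: an $h_1$ with the first set of properties can be written as $h_1=H+2D$ with $D\in N(X)$, and for any $D\in N(X)$ with $(H+2D)^2=\pm4$ the element $h_1=H+2D$ has the first set of properties.
   Context: $N(X)$ is the Picard lattice of the K3 surface $X$; it is an even lattice. $[H,h_1]_{\mathrm{pr}}$ denotes the primitive sublattice of $N(X)$ generated by $H$ and $h_1$, i.e. $N(X)\cap(\mathbb{Q}H+\mathbb{Q}h_1)$, and $H\cdot[H,h_1]_{\mathrm{pr}}$ denotes the set $\{H\cdot x: x\in [H,h_1]_{\mathrm{pr}}\}\subseteq\mathbb{Z}$. A Mukai vector $(r,c_1,s)$ is isotropic when $c_1^2=2rs$. *)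

(* Defs.v *)
From mathcomp Require Import all_boot all_order all_algebra.
Set Implicit Arguments. Unset Strict Implicit. Unset Printing Implicit Defensive.
Import GRing.Theory Num.Theory.
Local Open Scope ring_scope.

Definition lform (n : nat) (G : 'M[int]_n) (x y : 'rV[int]_n) : int :=
  (x *m G *m y^T) 0 0.

Definition even_lattice (n : nat) (G : 'M[int]_n) : Prop :=
  G^T = G /\ \det G != 0 /\ forall x : 'rV[int]_n, (2 %| lform G x x)%Z.

Definition primitive (n : nat) (x : 'rV[int]_n) : Prop :=
  forall (k : int) (y : 'rV[int]_n), x = k *: y -> k = 1 \/ k = -1.

(* [H, h]_pr = N ∩ (Q H + Q h) *)
Definition prim_span (n : nat) (H h : 'rV[int]_n) (x : 'rV[int]_n) : Prop :=
  exists (c a b : int), c != 0 /\ c *: x = a *: H + b *: h.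

Definition pairing_surj (n : nat) (G : 'M[int]_n) (H h : 'rV[int]_n) : Prop :=
  forall m : int, exists x, prim_span H h x /\ lform G H x = m.

Definition mukai_isotropic (n : nat) (G : 'M[int]_n) (r : int) (c1 : 'rV[int]_n) (s : int) : Prop :=
  lform G c1 c1 = 2 * r * s.

Definition good_h1 (n : nat) (G : 'M[int]_n) (H h1 : 'rV[int]_n) (s : int) : Prop :=
  lform G h1 h1 = 4 * s /\ (2 %| lform G H h1)%Z /\ pairing_surj G H h1.

(* Main.v *)
Require Import Defs.
From mathcomp Require Import all_boot all_order all_algebra.
From mathcomp Require Import zify ring lra.
Local Open Scope ring_scope.
Import GRing.Theory.
Set Implicit Arguments. Unset Strict Implicit.
Lemma par (x : int) : exists y, x = 2*y \/ x = 2*y+1.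
Proof. exists (x %/ 2)%Z. lia. Qed.

Lemma parity (a b c k q t s : int) : (2 %| k)%Z -> (2 %| q)%Z -> (s = 1 \/ s = -1) ->
  c = 8*a + b*k -> c*t = a*k + 4*b*s -> c*q = a + b*t ->
  (exists a1 b1 c1, a = 2*a1+1 /\ b = 2*b1+1 /\ c = 2*c1) \/
  (exists a1 b1 c1, a = 2*a1 /\ b = 2*b1 /\ c = 2*c1).
Proof.
move=> /dvdzP[k1 ->] /dvdzP[q1 ->] hs E1 E2 E3.
have [a1 ha] := par a; have [b1 hb] := par b.
case: ha => ha; case: hb => hb; subst a b c.
- right; exists a1, b1, (4*(2*a1) + b1*k1*2); split=>//; split=>//; ring.
- exfalso. have [t1 [ht|ht]] := par t; subst t.
  + have [u [hu|hu]] := par a1; have [v [hv|hv]] := par t1; have [w [hw|hw]] := par k1; subst; case: hs => ?; subst s; nia.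
  + nia.
- exfalso. nia.
- left; exists a1, b1, (4*(2*a1+1) + (2*b1+1)*k1); split=>//; split=>//; ring.
Qed.

Section L.
Variables (n : nat) (G : 'M[int]_n).
Lemma lformDr x y z : lform G x (y + z) = lform G x y + lform G x z.
Proof. by rewrite /lform linearD /= mulmxDr mxE. Qed.
Lemma lformZr x (k : int) y : lform G x (k *: y) = k * lform G x y.
Proof. by rewrite /lform linearZ /= -scalemxAr mxE. Qed.
Lemma lformC x y : G^T = G -> lform G x y = lform G y x.
Proof.
move=> hG; rewrite /lform -[in LHS](trmxK (x *m G *m y^T)) [in LHS]mxE.
by rewrite !trmx_mul trmxK hG mulmxA.
Qed.
End L.

Lemma odd_sq (d : int) : ~~ (2 %| d)%Z -> exists w, d * d = 8 * w + 1.
Proof.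
move=> hd; have [j [hj|hj]] := par d; first by (subst d; case/negP: hd; apply/dvdzP; exists j; ring).
subst d; have [u [hu|hu]] := par j; subst j.
- exists (u * (2*u+1)); ring.
- exists ((2*u+1)*(u+1)); ring.
Qed.

Lemma part3 n (G : 'M[int]_n) (H : 'rV[int]_n) (s : int) D :
  even_lattice G -> lform G H H = 8 -> (s = 1 \/ s = -1) ->
  mukai_isotropic G 2 (H + 2%:~R *: D) s -> good_h1 G H (H + 2%:~R *: D) s.
Proof.
move=> [hsym [_ hev]] hHH hs; rewrite /mukai_isotropic /good_h1 intz.
have e1 : lform G H (H + 2 *: D) = 8 + 2 * lform G H D by rewrite lformDr lformZr hHH.
have e2 : lform G (H + 2 *: D) (H + 2 *: D) = 8 + 4 * lform G H D + 4 * lform G D D.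
  rewrite lformDr lformZr (lformC (H + 2 *: D) H hsym) e1 (lformC (H + 2 *: D) D hsym) lformDr lformZr (lformC D H hsym); ring.
move=> hm; split; first by rewrite hm; ring.
split; first by rewrite e1; apply/dvdzP; exists (4 + lform G H D); ring.
have [e he] : exists e, lform G D D = 2 * e by have /dvdzP[e ->] := hev D; exists e; ring.
have hd : ~~ (2 %| lform G H D)%Z.
  apply/negP => /dvdzP[d' hd']; rewrite e2 he hd' in hm; case: hs hm => -> ; lia.
have [w hw] := odd_sq hd.
move=> m; exists ((- m * w) *: H + (m * lform G H D) *: D); split.
- exists 2, (2 * (- m * w) - m * lform G H D), (m * lform G H D); split=>//.
  apply/rowP => i; rewrite !mxE; ring.
- rewrite lformDr !lformZr hHH; nia.
Qed.

Lemma part2 n (G : 'M[int]_n) (H : 'rV[int]_n) (s : int) h1 :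
  even_lattice G -> lform G H H = 8 -> (s = 1 \/ s = -1) ->
  good_h1 G H h1 s -> exists D, h1 = H + 2%:~R *: D.
Proof.
move=> [hsym [_ hev]] hHH hs [h1sq [hk hps]].
have [x [[c [a [b [hc hx]]]] hHx]] := hps 1.
have E1 : c = 8 * a + b * lform G H h1.
  by have := congr1 (lform G H) hx; rewrite lformZr hHx lformDr !lformZr hHH => h; rewrite -[c]mulr1 h; ring.
have E2 : c * lform G h1 x = a * lform G H h1 + 4 * b * s.
  have := congr1 (lform G h1) hx; rewrite lformZr lformDr !lformZr h1sq (lformC h1 H hsym) => ->; ring.
have E3 : c * lform G x x = a + b * lform G h1 x.
  have := congr1 (lform G x) hx; rewrite lformZr lformDr !lformZr (lformC x H hsym) hHx (lformC x h1 hsym) => ->; ring.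
have : (absz c <= absz c)%N by []. move: {2}(absz c) => N.
elim: N c a b hc hx E1 E2 E3 => [|N IH] c a b hc hx E1 E2 E3 hN; first by (exfalso; move: hc; lia).
have [[a1 [b1 [c1 [ha [hb hcc]]]]]|[a1 [b1 [c1 [ha [hb hcc]]]]]] :=
  parity hk (hev x) hs E1 E2 E3.
- exists (c1 *: x - (a1 + 1) *: H - b1 *: h1); apply/rowP => i.
  have := congr1 (fun v : 'rV[int]_n => v 0 i) hx; rewrite !mxE intz ha hb hcc.
  move: (x 0 i) (H 0 i) (h1 0 i) => X Y Z hi.
  have -> : Y + 2*(c1*X - (a1+1)*Y - b1*Z) = 2*c1*X - ((2*a1+1)*Y + (2*b1+1)*Z) + Z by ring.
  by rewrite hi subrr add0r.
- apply: (IH c1 a1 b1).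
  + by apply/eqP => h0; move/eqP: hc; apply; rewrite hcc h0.
  + apply/rowP => i; have := congr1 (fun v : 'rV[int]_n => v 0 i) hx; rewrite !mxE ha hb hcc => hi; lia.
  + lia.
  + lia.
  + lia.
  + move: hN hc; rewrite hcc; lia.
Qed.

Theorem lemma3p2 (n : nat) (G : 'M[int]_n) (H : 'rV[int]_n) (s : int) :
  even_lattice G -> primitive H -> lform G H H = 8 -> (s = 1 \/ s = -1) ->
  ((exists h1, good_h1 G H h1 s) <->
   (exists D, mukai_isotropic G 2 (H + 2%:~R *: D) s)) /\
  (forall h1, good_h1 G H h1 s -> exists D, h1 = H + 2%:~R *: D) /\
  (forall D, mukai_isotropic G 2 (H + 2%:~R *: D) s -> good_h1 G H (H + 2%:~R *: D) s).
Proof.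
move=> hL _ hHH hs.
have P2 := fun h1 => @part2 n G H s h1 hL hHH hs.
have P3 := fun D => @part3 n G H s D hL hHH hs.
split; last by split.
split.
- move=> [h1 hg]; have [D hD] := P2 h1 hg; exists D; rewrite /mukai_isotropic -hD.
  by case: hg => -> _; ring.
- by move=> [D hD]; exists (H + 2%:~R *: D); apply: P3.
Qed.
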